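(* Let $I$ be a set, $P_i$ ($i\in I$) pastures, and $\bigotimes_{i\in I}P_i$ with $i_j:P_j\to\bigotimes_{i\in I}P_i$ as described in the context. If $P$ is a pasture and $f_i:P_i\to P$ is a morphism of pastures for each $i\in I$, then there exists a unique morphism $g:\bigotimes_{i\in I}P_i\to P$ such that $f_j=g\circ i_j$ for each $j\in I$.
   Context: A pasture is a multiplicative monoid $P$ with a zero element $0$ (absorbing) such that $P^\times=P\setminus\{0\}$ is an abelian group, together with an involution $x\mapsto -x$ fixing $0$, and a subset $N_P\subseteq P^3$ (write $a+b+c=0$ for $(a,b,c)\in N_P$) such that: (1) $N_P$ is invariant under permutations; (2) if $a+b+c=0$ then $da+db+dc=0$ for all $d\in P$; (3) $a+b+0=0$ iff $a=-b$. A morphism of pastures is a multiplicative map $f$ with $f(0)=0$, $f(1)=1$, $f(-a)=-f(a)$, preserving nullsets. The coproduct: let $\bigoplus_{i\in I}P_i^\times$ be the set of families $(x_i)_{i\in I}$ with $x_i\in P_i^\times$ and $x_i=1_i$ for all but finitely many $i$. Define $(x_i)\sim(y_i)$ iff there is a finite set of indices of even cardinality on which $x_i=-y_i$, with $x_i=y_i$ at all other indices. Set $\bigotimes_{i\in I}P_i=\{0\}\cup(\bigoplus_{i\in I}P_i^\times/\sim)$, classes written $[(x_i)_{i\in I}]$. Multiplication: $0$ absorbing, $[(x_i)][(y_i)]=[(x_iy_i)]$. Involution: $-0=0$ and $-[(x_i)]=[(y_i)]$ where $y_j=-x_j$ for one chosen index $j$ and $y_i=x_i$ for $i\neq j$.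 Nullset: for nonzero elements, $[(x_i)]+[(y_i)]+[(z_i)]=0$ iff there are representatives $(x_i'),(y_i'),(z_i')$ of these classes and an index $j$ with $x'_j+y'_j+z'_j=0$ in $P_j$ and $x'_i=y'_i=z'_i$ for all $i\neq j$; relations involving $0$ are the permutations of $u+v+0=0$ iff $u=-v$. This is a pasture. The maps: $i_j(0)=0$ and $i_j(x)=[(y_i)_{i\in I}]$ with $y_j=x$ and $y_i=1_i$ for $i\neq j$. *)

(* Defs.v *)
From Stdlib Require Import List Classical ClassicalEpsilon PeanoNat.
Import ListNotations.
Set Implicit Arguments.

(* Underlying data of a pasture: carrier, 0, 1, multiplication,
   involution x |-> -x, and the nullset N_P (null a b c  means  a+b+c=0). *)
Record pops := POps {
  car :> Type;
  pzero : car;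
  pone : car;
  pmul : car -> car -> car;
  pneg : car -> car;
  pnull : car -> car -> car -> Prop }.

Arguments pzero {p}.
Arguments pone {p}.
Arguments pmul {p}.
Arguments pneg {p}.
Arguments pnull {p}.

Definition is_pasture (P : pops) : Prop :=
  (forall a b c : P, pmul a (pmul b c) = pmul (pmul a b) c) /\
  (forall a b : P, pmul a b = pmul b a) /\
  (forall a : P, pmul pone a = a) /\
  (forall a : P, pmul pzero a = pzero) /\
  (@pone P <> pzero) /\
  (forall a b : P, a <> pzero -> b <> pzero -> pmul a b <> pzero) /\
  (forall a : P, a <> pzero -> exists b, pmul a b = pone) /\
  (forall a : P, pneg (pneg a) = a) /\
  (pneg (@pzero P) = pzero) /\
  (forall a b c : P, pnull a b c ->
     pnull a c b /\ pnull b a c /\ pnull b c a /\ pnull c a b /\ pnull c b a) /\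
  (forall a b c d : P, pnull a b c -> pnull (pmul d a) (pmul d b) (pmul d c)) /\
  (forall a b : P, pnull a b pzero <-> a = pneg b).

Record pasture := Pasture { pops_of :> pops; pasture_ax : is_pasture pops_of }.

Definition is_morphism (P Q : pops) (f : P -> Q) : Prop :=
  f pzero = pzero /\ f pone = pone /\
  (forall a b, f (pmul a b) = pmul (f a) (f b)) /\
  (forall a, f (pneg a) = pneg (f a)) /\
  (forall a b c, pnull a b c -> pnull (f a) (f b) (f c)).

Section Facts.
Variable P : pasture.

Lemma p_mul_nz (a b : P) : a <> pzero -> b <> pzero -> pmul a b <> pzero.
Proof. destruct (pasture_ax P) as (_&_&_&_&_&H&_). apply H. Qed.

Lemma p_one_nz : @pone P <> pzero.
Proof. destruct (pasture_ax P) as (_&_&_&_&H&_). exact H. Qed.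

Lemma p_one_mul (a : P) : pmul pone a = a.
Proof. destruct (pasture_ax P) as (_&_&H&_). apply H. Qed.

Lemma p_neg_nz (a : P) : a <> pzero -> pneg a <> pzero.
Proof.
  destruct (pasture_ax P) as (_&_&_&_&_&_&_&Hn&H0&_).
  intros Ha E. apply Ha. rewrite <- (Hn a), E. exact H0.
Qed.
End Facts.

Section Coprod.
Variable I : Type.
Variable P : I -> pasture.
Variable j0 : I. (* the index used to define the involution; I is nonempty *)

Definition idec (i j : I) : {i = j} + {i <> j} := excluded_middle_informative _.

Definition rawfam := forall i : I, P i.

Definition good (x : rawfam) : Prop :=
  (forall i, x i <> pzero) /\
  exists l : list I, forall i, x i <> pone -> In i l.

Definition fam := { x : rawfam | good x }.

Definition fam_equiv (x y : fam) : Prop :=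
  exists S : list I, NoDup S /\ Nat.Even (length S) /\
    (forall i, In i S -> proj1_sig x i = pneg (proj1_sig y i)) /\
    (forall i, ~ In i S -> proj1_sig x i = proj1_sig y i).

Definition ncar := { C : fam -> Prop | exists x, forall y, C y <-> fam_equiv x y }.

Definition cls (x : fam) : ncar :=
  exist _ (fam_equiv x) (ex_intro _ x (fun y => iff_refl _)).

Definition rep (C : ncar) : fam :=
  proj1_sig (constructive_indefinite_description _ (proj2_sig C)).

Lemma good_one : good (fun i => pone).
Proof.
  split. intro i. apply p_one_nz. exists []. intros i H. now elim H.
Qed.
Definition fam_one : fam := exist _ _ good_one.

Lemma good_mul (x y : fam) : good (fun i => pmul (proj1_sig x i) (proj1_sig y i)).
Proof.
  destruct x as [x [Hx [lx Lx]]], y as [y [Hy [ly Ly]]]; simpl. split.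
  - intro i. apply p_mul_nz; auto.
  - exists (lx ++ ly). intros i Hi. apply in_or_app.
    destruct (classic (x i = pone)) as [E|E]; [|left; auto].
    right. apply Ly. intro F. apply Hi. rewrite E, F. apply p_one_mul.
Qed.
Definition fam_mul (x y : fam) : fam := exist _ _ (good_mul x y).

Definition flipraw (x : fam) : rawfam := fun i =>
  match idec i j0 with
  | left _ => pneg (proj1_sig x i)
  | right _ => proj1_sig x i
  end.

Lemma good_flip (x : fam) : good (flipraw x).
Proof.
  destruct x as [x [Hx [lx Lx]]]; unfold flipraw; simpl. split.
  - intro i. destruct (idec i j0); [apply p_neg_nz|]; auto.
  - exists (j0 :: lx). intros i Hi. destruct (idec i j0) as [e|n].
    + left; auto.
    + right; auto.
Qed.
Definition fam_flip (x : fam) : fam := exist _ _ (good_flip x).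

(* operations of the coproduct; None plays the role of 0 *)
Definition Ccar := option ncar.

Definition cmul (A B : Ccar) : Ccar :=
  match A, B with
  | Some a, Some b => Some (cls (fam_mul (rep a) (rep b)))
  | _, _ => None
  end.

Definition cneg (A : Ccar) : Ccar :=
  match A with
  | Some a => Some (cls (fam_flip (rep a)))
  | None => None
  end.

Definition cnull (A B C : Ccar) : Prop :=
  match A, B, C with
  | Some a, Some b, Some c =>
      exists x y z : fam,
        proj1_sig a x /\ proj1_sig b y /\ proj1_sig c z /\
        exists j : I,
          pnull (proj1_sig x j) (proj1_sig y j) (proj1_sig z j) /\
          forall i, i <> j -> proj1_sig x i = proj1_sig y i /\
                              proj1_sig y i = proj1_sig z i
  | _, _, _ =>
      (C = None /\ A = cneg B) \/ (B = None /\ A = cneg C) \/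
      (A = None /\ B = cneg C)
  end.

Definition coprod : pops := POps None (Some (cls fam_one)) cmul cneg cnull.

Definition injraw (j : I) (x : P j) : rawfam := fun i =>
  match idec j i with
  | left e => eq_rect j (fun k => car (pops_of (P k))) x i e
  | right _ => pone
  end.

Lemma good_inj (j : I) (x : P j) : x <> pzero -> good (@injraw j x).
Proof.
  intro Hx. unfold injraw. split.
  - intro i. destruct (idec j i) as [e|n]; [subst; exact Hx | apply p_one_nz].
  - exists [j]. intros i Hi. destruct (idec j i) as [e|n].
    + left; auto.
    + now elim Hi.
Qed.

Definition inj (j : I) (x : P j) : coprod :=
  match excluded_middle_informative (x = pzero) with
  | left _ => None
  | right h => Some (cls (exist _ _ (@good_inj j x h)))
  end.

End Coprod.
Arguments inj {I} P j0 j x.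
Arguments coprod {I} P j0.
Arguments is_morphism {P Q} f.

(* Main.v *)
Require Import Defs.
From Stdlib Require Import List Classical ClassicalEpsilon PeanoNat Permutation Lia
  FunctionalExtensionality PropExtensionality.
Import ListNotations.

Section PF.
Variable P : pasture.
Lemma pf_assoc (a b c : P) : pmul a (pmul b c) = pmul (pmul a b) c.
Proof. destruct (pasture_ax P) as (H&_). apply H. Qed.
Lemma pf_comm (a b : P) : pmul a b = pmul b a.
Proof. destruct (pasture_ax P) as (_&H&_). apply H. Qed.
Lemma pf_one_l (a : P) : pmul pone a = a.
Proof. destruct (pasture_ax P) as (_&_&H&_). apply H. Qed.
Lemma pf_one_r (a : P) : pmul a pone = a.
Proof. rewrite pf_comm. apply pf_one_l. Qed.
Lemma pf_zero_l (a : P) : pmul pzero a = pzero.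
Proof. destruct (pasture_ax P) as (_&_&_&H&_). apply H. Qed.
Lemma pf_zero_r (a : P) : pmul a pzero = pzero.
Proof. rewrite pf_comm. apply pf_zero_l. Qed.
Lemma pf_negneg (a : P) : pneg (pneg a) = a.
Proof. destruct (pasture_ax P) as (_&_&_&_&_&_&_&H&_). apply H. Qed.
Lemma pf_neg0 : pneg (@pzero P) = pzero.
Proof. destruct (pasture_ax P) as (_&_&_&_&_&_&_&_&H&_). apply H. Qed.
Lemma pf_perm (a b c : P) : pnull a b c ->
     pnull a c b /\ pnull b a c /\ pnull b c a /\ pnull c a b /\ pnull c b a.
Proof. destruct (pasture_ax P) as (_&_&_&_&_&_&_&_&_&H&_). apply H. Qed.
Lemma pf_scale (a b c d : P) : pnull a b c -> pnull (pmul d a) (pmul d b) (pmul d c).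
Proof. destruct (pasture_ax P) as (_&_&_&_&_&_&_&_&_&_&H&_). apply H. Qed.
Lemma pf_null0 (a b : P) : pnull a b pzero <-> a = pneg b.
Proof. destruct (pasture_ax P) as (_&_&_&_&_&_&_&_&_&_&_&H). apply H. Qed.
Lemma pf_mul_neg_r (d a : P) : pmul d (pneg a) = pneg (pmul d a).
Proof.
  assert (H : pnull (pneg a) a pzero) by (apply pf_null0; reflexivity).
  apply (pf_scale _ _ _ d) in H. rewrite pf_zero_r in H. apply pf_null0 in H. exact H.
Qed.
Lemma pf_mul_neg_l (d a : P) : pmul (pneg a) d = pneg (pmul a d).
Proof. rewrite pf_comm, pf_mul_neg_r, pf_comm. reflexivity. Qed.
Lemma pf_rearr (a b c d : P) : pmul (pmul a b) (pmul c d) = pmul (pmul a c) (pmul b d).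
Proof.
  rewrite <- !pf_assoc. f_equal. rewrite !pf_assoc. f_equal. apply pf_comm.
Qed.
Lemma pf_swap3 (a b c : P) : pmul a (pmul b c) = pmul b (pmul a c).
Proof. rewrite !pf_assoc. f_equal. apply pf_comm. Qed.
End PF.

Section Main.
Variable I : Type.
Variable P : I -> pasture.
Variable j0 : I.
Variable Q : pasture.
Variable f : forall i, P i -> Q.
Hypothesis Hf : forall i, is_morphism (f i).

Lemma f0 i : f i pzero = pzero. Proof. destruct (Hf i) as (H&_). exact H. Qed.
Lemma f1 i : f i pone = pone. Proof. destruct (Hf i) as (_&H&_). exact H. Qed.
Lemma fmul i a b : f i (pmul a b) = pmul (f i a) (f i b).
Proof. destruct (Hf i) as (_&_&H&_). apply H. Qed.
Lemma fneg i a : f i (pneg a) = pneg (f i a).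
Proof. destruct (Hf i) as (_&_&_&H&_). apply H. Qed.
Lemma fnull i a b c : pnull a b c -> pnull (f i a) (f i b) (f i c).
Proof. destruct (Hf i) as (_&_&_&_&H). apply H. Qed.

Definition prodL (l : list I) (x : rawfam P) : Q :=
  fold_right (fun i acc => pmul (f i (x i)) acc) pone l.

Definition cover (x : rawfam P) (l : list I) := forall i, x i <> pone -> In i l.

Lemma prodL_ext l x y : (forall i, In i l -> x i = y i) -> prodL l x = prodL l y.
Proof.
  induction l as [|a l IH]; simpl; intros H; auto.
  rewrite H by auto. f_equal. apply IH. auto.
Qed.

Lemma prodL_filter l x : prodL l x =
  prodL (filter (fun i => if excluded_middle_informative (x i = pone) then false else true) l) x.
Proof.
  induction l as [|a l IH]; simpl; auto.
  destruct (excluded_middle_informative (x a = pone)) as [E|E]; simpl.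
  - rewrite E, f1, pf_one_l. exact IH.
  - f_equal; exact IH.
Qed.

Lemma prodL_perm l l' x : Permutation l l' -> prodL l x = prodL l' x.
Proof.
  induction 1; simpl; auto.
  - f_equal; auto.
  - apply pf_swap3.
  - congruence.
Qed.

Lemma prodL_cover l l' x : NoDup l -> NoDup l' -> cover x l -> cover x l' ->
  prodL l x = prodL l' x.
Proof.
  intros N N' C C'. rewrite (prodL_filter l), (prodL_filter l'). apply prodL_perm.
  apply NoDup_Permutation; try apply NoDup_filter; auto.
  intro i. rewrite !filter_In.
  destruct (excluded_middle_informative (x i = pone)); split; intros [H1 H2];
    try discriminate; split; auto.
Qed.

Definition supl (x : fam P) : list I :=
  nodup (@idec I) (proj1_sig (constructive_indefinite_description _ (proj2 (proj2_sig x)))).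

Lemma supl_nodup x : NoDup (supl x).
Proof. apply NoDup_nodup. Qed.

Lemma supl_cover x : cover (proj1_sig x) (supl x).
Proof.
  intros i H. unfold supl. apply nodup_In.
  destruct (constructive_indefinite_description _ _) as [l Hl]. simpl. apply Hl, H.
Qed.

Definition Gf (x : fam P) : Q := prodL (supl x) (proj1_sig x).

Lemma Gf_spec x l : NoDup l -> cover (proj1_sig x) l -> Gf x = prodL l (proj1_sig x).
Proof. intros; apply prodL_cover; auto using supl_nodup, supl_cover. Qed.

Lemma prodL_flip l a (x y : rawfam P) : NoDup l -> In a l -> y a = pneg (x a) ->
  (forall i, i <> a -> y i = x i) -> prodL l y = pneg (prodL l x).
Proof.
  induction l as [|b l IH]; intros N Ia Ha Ho; [destruct Ia|].
  inversion N; subst. simpl. destruct (idec b a) as [e|ne].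
  - subst b. rewrite Ha, fneg, (prodL_ext l y x). 2: intros i Hi; apply Ho; intro; subst; contradiction.
    apply pf_mul_neg_l.
  - destruct Ia as [e|Ia]; [congruence|]. rewrite Ho by auto. rewrite IH by auto.
    apply pf_mul_neg_r.
Qed.

Fixpoint negn (n : nat) (q : Q) : Q := match n with 0 => q | S n => pneg (negn n q) end.

Lemma negn_pneg n q : negn n (pneg q) = pneg (negn n q).
Proof. induction n; simpl; congruence. Qed.

Lemma negn_even n q : Nat.Even n -> negn n q = q.
Proof.
  intros [m ->]. induction m; simpl; auto.
  replace (m + S (m + 0)) with (S (2 * m)) by lia. simpl. rewrite pf_negneg. exact IHm.
Qed.

Lemma prodL_equiv S : NoDup S -> forall (x y : rawfam P) l, NoDup l ->
  (forall i, In i S -> In i l) -> cover x l -> cover y l ->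
  (forall i, In i S -> x i = pneg (y i)) -> (forall i, ~ In i S -> x i = y i) ->
  prodL l x = negn (length S) (prodL l y).
Proof.
  induction 1 as [|a S Na NS IH]; intros x y l Nl Sl Cx Cy H1 H2.
  - simpl. apply prodL_ext. intros i _. apply H2. auto.
  - set (y' := (fun i => match idec a i with left _ => pneg (y i) | right _ => y i end) : rawfam P).
    assert (Fl : prodL l y' = pneg (prodL l y)).
    { apply (prodL_flip l a); auto. apply Sl; left; auto.
      unfold y'. destruct (idec a a); [auto|congruence].
      intros i ni. unfold y'. destruct (idec a i); [congruence|auto]. }
    simpl. rewrite <- negn_pneg, <- Fl. apply IH; auto.
    + intros i Hi; apply Sl; right; auto.
    + intros i Hi. unfold y' in Hi. destruct (idec a i) as [e|ne].
      * subst i. apply Sl; left; auto.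
      * apply Cy, Hi.
    + intros i Hi. unfold y'. destruct (idec a i) as [e|ne].
      * subst. contradiction.
      * apply H1. right; auto.
    + intros i Hi. unfold y'. destruct (idec a i) as [e|ne].
      * subst. apply H1. left; auto.
      * apply H2. intros [E|E]; auto.
Qed.

Lemma Gf_equiv (x y : fam P) : fam_equiv x y -> Gf x = Gf y.
Proof.
  intros (S & NS & ES & H1 & H2).
  set (l := nodup (@idec I) (supl x ++ supl y ++ S)).
  assert (Nl : NoDup l) by apply NoDup_nodup.
  assert (Hl : forall i, In i (supl x ++ supl y ++ S) -> In i l)
    by (intros; apply nodup_In; auto).
  assert (Cx : cover (proj1_sig x) l).
  { intros i Hi; apply Hl; rewrite !in_app_iff; left; apply supl_cover; auto. }
  assert (Cy : cover (proj1_sig y) l).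
  { intros i Hi; apply Hl; rewrite !in_app_iff; right; left; apply supl_cover; auto. }
  rewrite (Gf_spec x l), (Gf_spec y l); auto.
  rewrite (prodL_equiv S NS (proj1_sig x) (proj1_sig y) l); auto.
  - apply negn_even; auto.
  - intros i Hi; apply Hl; rewrite !in_app_iff; auto.
Qed.

Lemma prodL_mul l (x y : rawfam P) :
  prodL l (fun i => pmul (x i) (y i)) = pmul (prodL l x) (prodL l y).
Proof.
  induction l as [|a l IH]; simpl. rewrite pf_one_l; auto.
  rewrite IH, fmul. apply pf_rearr.
Qed.

Lemma Gf_mul x y : Gf (fam_mul x y) = pmul (Gf x) (Gf y).
Proof.
  set (l := nodup (@idec I) (supl x ++ supl y)).
  assert (Nl : NoDup l) by apply NoDup_nodup.
  assert (Cx : cover (proj1_sig x) l).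
  { intros i Hi; apply nodup_In; rewrite !in_app_iff; left; apply supl_cover; auto. }
  assert (Cy : cover (proj1_sig y) l).
  { intros i Hi; apply nodup_In; rewrite !in_app_iff; right; apply supl_cover; auto. }
  rewrite (Gf_spec x l), (Gf_spec y l), (Gf_spec _ l); auto.
  - apply prodL_mul.
  - intros i Hi. simpl in Hi.
    destruct (classic (proj1_sig x i = pone)) as [E|E]; [|auto].
    apply Cy. intro F. apply Hi. rewrite E, F. apply pf_one_l.
Qed.

Lemma Gf_flip x : Gf (fam_flip j0 x) = pneg (Gf x).
Proof.
  set (l := nodup (@idec I) (supl x ++ [j0])).
  assert (Nl : NoDup l) by apply NoDup_nodup.
  assert (Cx : cover (proj1_sig x) l).
  { intros i Hi; apply nodup_In; rewrite !in_app_iff; left; apply supl_cover; auto. }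
  assert (Ij : In j0 l) by (apply nodup_In; rewrite in_app_iff; right; left; auto).
  rewrite (Gf_spec x l), (Gf_spec _ l); auto.
  - apply (prodL_flip l j0); auto.
    + simpl. unfold flipraw. destruct (idec j0 j0); [auto|congruence].
    + intros i ni. simpl. unfold flipraw. destruct (idec i j0); [congruence|auto].
  - intros i Hi. simpl in Hi. unfold flipraw in Hi. destruct (idec i j0) as [e|ne].
    + subst; auto.
    + apply Cx; auto.
Qed.

Lemma equiv_refl (x : fam P) : fam_equiv x x.
Proof.
  exists []. split; [constructor|]. split; [exists 0; reflexivity|].
  split; [intros i []|]. auto.
Qed.

Lemma equiv_sym (x y : fam P) : fam_equiv x y -> fam_equiv y x.
Proof.
  intros (S&N&E&H1&H2). exists S; split; auto; split; auto; split.
  - intros i Hi. rewrite H1 by auto. now rewrite pf_negneg.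
  - intros i Hi; symmetry; auto.
Qed.

Definition notin (S : list I) (i : I) : bool :=
  if in_dec (@idec I) i S then false else true.

Lemma notin_iff S i : notin S i = true <-> ~ In i S.
Proof. unfold notin; destruct in_dec; split; intros; try congruence; tauto. Qed.

Lemma notin_neg S i : negb (notin S i) = true <-> In i S.
Proof. unfold notin; destruct in_dec; simpl; split; intros; try congruence; tauto. Qed.

Lemma filter_len (p : I -> bool) l :
  length (filter p l) + length (filter (fun i => negb (p i)) l) = length l.
Proof. induction l as [|a l IH]; simpl; auto. destruct (p a); simpl; lia. Qed.

Lemma equiv_trans (x y z : fam P) : fam_equiv x y -> fam_equiv y z -> fam_equiv x z.
Proof.
  intros (S1&N1&E1&A1&B1) (S2&N2&E2&A2&B2).
  exists (filter (notin S2) S1 ++ filter (notin S1) S2).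
  split; [|split; [|split]].
  - apply NoDup_app; try apply NoDup_filter; auto.
    intros a Ha Hb. rewrite filter_In, notin_iff in Ha, Hb. tauto.
  - assert (K : length (filter (fun i => negb (notin S2 i)) S1) =
                length (filter (fun i => negb (notin S1 i)) S2)).
    { apply Permutation_length, NoDup_Permutation; try apply NoDup_filter; auto.
      intro i. rewrite !filter_In, !notin_neg. tauto. }
    pose proof (filter_len (notin S2) S1). pose proof (filter_len (notin S1) S2).
    rewrite length_app. destruct E1 as [m1 Hm1], E2 as [m2 Hm2].
    exists (m1 + m2 - length (filter (fun i => negb (notin S2 i)) S1)). lia.
  - intros i Hi. rewrite in_app_iff, !filter_In, !notin_iff in Hi.
    destruct Hi as [[Ha Hb]|[Ha Hb]].
    + rewrite A1, B2 by auto. reflexivity.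
    + rewrite B1, A2 by auto. reflexivity.
  - intros i Hi. rewrite in_app_iff, !filter_In, !notin_iff in Hi.
    destruct (in_dec (@idec I) i S1) as [a|a], (in_dec (@idec I) i S2) as [b|b].
    + rewrite A1, A2, pf_negneg by auto. reflexivity.
    + tauto.
    + tauto.
    + rewrite B1, B2 by auto. reflexivity.
Qed.

Lemma equiv_mul_l (u u' v : fam P) : fam_equiv u u' -> fam_equiv (fam_mul u v) (fam_mul u' v).
Proof.
  intros (S&N&E&H1&H2). exists S; split; auto; split; auto; split; simpl.
  - intros i Hi. rewrite H1 by auto. apply pf_mul_neg_l.
  - intros i Hi. rewrite H2 by auto. reflexivity.
Qed.

Lemma equiv_mul_r (u v v' : fam P) : fam_equiv v v' -> fam_equiv (fam_mul u v) (fam_mul u v').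
Proof.
  intros (S&N&E&H1&H2). exists S; split; auto; split; auto; split; simpl.
  - intros i Hi. rewrite H1 by auto. apply pf_mul_neg_r.
  - intros i Hi. rewrite H2 by auto. reflexivity.
Qed.

Lemma ncar_ext (C D : ncar P) : (forall y, proj1_sig C y <-> proj1_sig D y) -> C = D.
Proof.
  destruct C as [c hc], D as [d hd]; simpl; intros H.
  assert (c = d) by (apply functional_extensionality; intro y;
                     apply propositional_extensionality; auto).
  subst d. f_equal. apply proof_irrelevance.
Qed.

Lemma rep_spec (C : ncar P) : forall y, proj1_sig C y <-> fam_equiv (rep C) y.
Proof.
  intro y. unfold rep. destruct (constructive_indefinite_description _ _) as [x Hx].
  simpl. apply Hx.
Qed.

Lemma cls_rep (C : ncar P) : cls (rep C) = C.
Proof. apply ncar_ext. intro y. simpl. rewrite rep_spec. tauto. Qed.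

Lemma rep_cls (x : fam P) : fam_equiv x (rep (cls x)).
Proof. apply (rep_spec (cls x) (rep (cls x))). apply equiv_refl. Qed.

Lemma cls_eq (x y : fam P) : fam_equiv x y -> cls x = cls y.
Proof.
  intro H. apply ncar_ext. intro z. simpl. split; intro K.
  - apply (equiv_trans _ x); auto. apply equiv_sym; auto.
  - apply (equiv_trans _ y); auto.
Qed.

Definition g (A : option (ncar P)) : Q :=
  match A with None => pzero | Some C => Gf (rep C) end.

Lemma g_cls (x : fam P) : g (Some (cls x)) = Gf x.
Proof. simpl. symmetry. apply Gf_equiv, rep_cls. Qed.

Lemma g_mem (C : ncar P) (x : fam P) : proj1_sig C x -> g (Some C) = Gf x.
Proof. intro H. simpl. apply Gf_equiv, rep_spec, H. Qed.

Lemma g_neg A : g (cneg j0 A) = pneg (g A).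
Proof.
  destruct A as [a|]; simpl.
  - rewrite <- Gf_flip. apply g_cls.
  - symmetry; apply pf_neg0.
Qed.

Lemma g_null_deg (A B C : option (ncar P)) :
  ((C = None /\ A = cneg j0 B) \/ (B = None /\ A = cneg j0 C) \/
   (A = None /\ B = cneg j0 C)) -> pnull (g A) (g B) (g C).
Proof.
  intros [[-> ->]|[[-> ->]|[-> ->]]]; rewrite g_neg; simpl g.
  - apply pf_null0; reflexivity.
  - assert (H : pnull (pneg (g C)) (g C) pzero) by (apply pf_null0; reflexivity).
    apply pf_perm in H. tauto.
  - assert (H : pnull (pneg (g C)) (g C) pzero) by (apply pf_null0; reflexivity).
    apply pf_perm in H. tauto.
Qed.

Lemma prodL_split l j (x : rawfam P) : NoDup l -> In j l ->
  prodL l x = pmul (f j (x j)) (prodL (remove (@idec I) j l) x).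
Proof.
  induction l as [|b l IH]; intros N Hj; [destruct Hj|].
  inversion N; subst. simpl. destruct (idec j b) as [e|ne].
  - subst b. rewrite notin_remove by auto. reflexivity.
  - simpl. destruct Hj as [e|Hj]; [congruence|]. rewrite IH by auto. apply pf_swap3.
Qed.

Lemma g_morph : is_morphism (g : coprod P j0 -> Q).
Proof.
  split; [reflexivity|]. split; [|split; [|split]].
  - change (g (Some (cls (fam_one P))) = pone). rewrite g_cls.
    rewrite (Gf_spec _ []). reflexivity. constructor.
    intros i H. simpl in H. congruence.
  - intros [a|] [b|]; cbn [pmul coprod cmul].
    + rewrite g_cls. apply Gf_mul.
    + symmetry; apply pf_zero_r.
    + symmetry; apply pf_zero_l.
    + symmetry; apply pf_zero_l.
  - intros a. apply g_neg.
  - intros [a|] [b|] [c|] H; try (apply g_null_deg; exact H).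
    hnf in H. destruct H as (x&y&z&Hx&Hy&Hz&j&Hn&Ho).
    rewrite (g_mem a x Hx), (g_mem b y Hy), (g_mem c z Hz).
    set (l := nodup (@idec I) (supl x ++ supl y ++ supl z ++ [j])).
    assert (Nl : NoDup l) by apply NoDup_nodup.
    assert (Cx : cover (proj1_sig x) l).
    { intros i Hi; apply nodup_In; rewrite !in_app_iff; left; apply supl_cover; auto. }
    assert (Cy : cover (proj1_sig y) l).
    { intros i Hi; apply nodup_In; rewrite !in_app_iff; right; left; apply supl_cover; auto. }
    assert (Cz : cover (proj1_sig z) l).
    { intros i Hi; apply nodup_In; rewrite !in_app_iff; right; right; left; apply supl_cover; auto. }
    assert (Ij : In j l) by (apply nodup_In; rewrite !in_app_iff; right; right; right; left; auto).
    rewrite (Gf_spec x l), (Gf_spec y l), (Gf_spec z l) by auto.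
    rewrite !(prodL_split l j) by auto.
    set (r := remove (@idec I) j l).
    assert (E1 : prodL r (proj1_sig y) = prodL r (proj1_sig x)).
    { apply prodL_ext. intros i Hi. apply in_remove in Hi. symmetry; apply Ho; tauto. }
    assert (E2 : prodL r (proj1_sig z) = prodL r (proj1_sig x)).
    { apply prodL_ext. intros i Hi. apply in_remove in Hi.
      destruct (Ho i) as [K1 K2]; [tauto|]. congruence. }
    rewrite E1, E2. rewrite !(pf_comm _ _ (prodL r (proj1_sig x))).
    apply pf_scale. apply fnull. exact Hn.
Qed.

Lemma g_inj j x : f j x = g (inj P j0 j x).
Proof.
  unfold inj. destruct (excluded_middle_informative (x = pzero)) as [e|ne].
  - subst. simpl. apply f0.
  - rewrite g_cls. rewrite (Gf_spec _ [j]).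
    + simpl. unfold injraw. destruct (idec j j) as [e|n]; [|congruence].
      rewrite (proof_irrelevance _ e eq_refl). simpl. symmetry; apply pf_one_r.
    + constructor; [intros []|constructor].
    + intros i H. simpl in H. unfold injraw in H. destruct (idec j i) as [e|n].
      * left; exact e.
      * congruence.
Qed.

Lemma uniq_claim (h : coprod P j0 -> Q) : is_morphism h ->
  (forall j x, f j x = h (inj P j0 j x)) ->
  forall l, NoDup l -> forall x : fam P, cover (proj1_sig x) l ->
  h (Some (cls x)) = prodL l (proj1_sig x).
Proof.
  intros Hh HI. destruct Hh as (h0&h1&hm&hn&hnull).
  induction 1 as [|a l Na Nl IH]; intros x Cx.
  - simpl. assert (E : cls x = cls (fam_one P)).
    { apply cls_eq. exists []. split; [constructor|]. split; [exists 0; reflexivity|].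
      split; [intros i []|]. intros i _. simpl.
      destruct (classic (proj1_sig x i = pone)) as [K|K]; auto.
      apply Cx in K. destruct K. }
    rewrite E. exact h1.
  - set (x'r := (fun i => match idec a i with left _ => pone | right _ => proj1_sig x i end)
                : rawfam P).
    assert (Gx' : good x'r).
    { split.
      - intro i. unfold x'r. destruct (idec a i). apply p_one_nz. apply (proj2_sig x).
      - exists (supl x). intros i Hi. unfold x'r in Hi. destruct (idec a i).
        + congruence.
        + apply supl_cover; auto. }
    set (x' := exist _ x'r Gx' : fam P).
    assert (Cx' : cover (proj1_sig x') l).
    { intros i Hi. simpl in Hi. unfold x'r in Hi. destruct (idec a i) as [e|ne].
      - congruence.
      - destruct (Cx i Hi) as [E|E]; [congruence|auto]. }
    pose proof (HI a (proj1_sig x a)) as Ha. unfold inj in Ha.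
    destruct (excluded_middle_informative _) as [e|ne] in Ha.
    { exfalso. revert e. apply (proj2_sig x). }
    set (u := exist _ (injraw P a (proj1_sig x a)) (good_inj P a ne) : fam P) in Ha.
    assert (Ex : cls x = cls (fam_mul (rep (cls u)) (rep (cls x')))).
    { apply cls_eq. apply (equiv_trans _ (fam_mul u x')).
      - exists []. split; [constructor|]. split; [exists 0; reflexivity|].
        split; [intros i []|]. intros i _. simpl. unfold injraw, x'r.
        destruct (idec a i) as [e|ne'].
        + subst i. simpl. symmetry; apply pf_one_r.
        + symmetry; apply pf_one_l.
      - apply (equiv_trans _ (fam_mul (rep (cls u)) x')).
        + apply equiv_mul_l, rep_cls.
        + apply equiv_mul_r, rep_cls. }
    rewrite Ex.
    change (h (pmul (Some (cls u) : coprod P j0) (Some (cls x'))) =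
            prodL (a :: l) (proj1_sig x)).
    rewrite hm, <- Ha, IH by auto. simpl. f_equal.
    apply prodL_ext. intros i Hil. simpl. unfold x'r.
    destruct (idec a i) as [e|ne']; [subst; contradiction|reflexivity].
Qed.

Lemma main_sec : exists! g0 : coprod P j0 -> Q,
    is_morphism g0 /\ (forall (j : I) (x : P j), f j x = g0 (inj P j0 j x)).
Proof.
  exists g. split. split. apply g_morph. apply g_inj.
  intros h [Hh Hi]. apply functional_extensionality. intros [C|].
  - rewrite <- (cls_rep C). rewrite g_cls.
    rewrite (uniq_claim h Hh Hi (supl (rep C)) (supl_nodup _) (rep C) (supl_cover _)).
    reflexivity.
  - destruct Hh as (h0&_). symmetry; exact h0.
Qed.

End Main.

Theorem lemma7p4 (I : Type) (P : I -> pasture) (j0 : I) (Q : pasture)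
    (f : forall i : I, P i -> Q) :
  (forall i : I, is_morphism (f i)) ->
  exists! g : coprod P j0 -> Q,
    is_morphism g /\ (forall (j : I) (x : P j), f j x = g (inj P j0 j x)).
Proof.
  intros Hf. exact (main_sec I P j0 Q f Hf).
Qed.
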